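(* Let $K$ be a field, $1 \le d \le n$, $N \ge n+d$, and let $I = (S_N.\,e_n^d(x_1,\dots,x_n)) \subseteq K[x_1,\dots,x_N]$. If $\mathrm{char}(K) \nmid \binom{n}{d}$, then $$\sqrt{I} = (S_N.\,x_1\cdots x_d).$$ Moreover, if $\mathrm{char}(K) \mid \binom{n}{d}$, then for any $N \ge n$ the ideal $\sqrt{(S_N.\,e_n^d(x_1,\dots,x_n))}\subseteq K[x_1,\dots,x_N]$ contains no monomial.
   Context: $e_n^d(x_1,\dots,x_n)$ denotes the elementary symmetric polynomial of degree $d$ in $x_1,\dots,x_n$. $S_N$ acts on $K[x_1,\dots,x_N]$ by permuting variables; $(S_N.g)$ denotes the ideal generated by the $S_N$-orbit of $g$. *)

(* Defs.v *)
From HB Require Import structures.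
From mathcomp Require Import all_boot all_order all_algebra all_fingroup.
From mathcomp Require Import mpoly.
Set Implicit Arguments. Unset Strict Implicit. Unset Printing Implicit Defensive.
Import GRing.Theory.
Local Open Scope ring_scope.

Section Defs.
Variables (K : fieldType) (N : nat).
Local Notation P := {mpoly K[N]}.

Definition in_ideal (G : P -> Prop) (p : P) : Prop :=
  exists cs : seq (P * P),
    (forall cg, cg \in cs -> G cg.2) /\ p = \sum_(cg <- cs) cg.1 * cg.2.

Definition in_radical (G : P -> Prop) (p : P) : Prop :=
  exists k : nat, in_ideal G (p ^+ k).

Definition SN_orbit (g : P) : P -> Prop :=
  fun q => exists s : 'S_N, q = msym s g.

(* e_n^d(x_1, ..., x_n) inside K[x_1, ..., x_N] (variables indexed from 0) *)
Definition esym_first (n d : nat) : P :=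
  \sum_(h : {set 'I_N} | (h \subset [set i : 'I_N | (i < n)%N]) && (#|h| == d))
    \prod_(i in h) 'X_i.

Definition prod_first (d : nat) : P :=
  \prod_(i : 'I_N | (i < d)%N) 'X_i.

Definition is_monomial (p : P) : Prop := exists m : 'X_{1..N}, p = 'X_[m].

End Defs.

(* Main.v *)
Require Import Defs.
From HB Require Import structures.
From mathcomp Require Import all_boot all_order all_algebra all_fingroup.
From mathcomp Require Import mpoly.
From mathcomp Require Import ring zify.
From mathcomp Require classical_sets.
From Stdlib Require Import Classical_Prop.
Set Implicit Arguments. Unset Strict Implicit. Unset Printing Implicit Defensive.
Import GRing.Theory.
Local Open Scope ring_scope.

Section Ideals.
Variable R : comNzRingType.

Definition gideal (G : R -> Prop) (p : R) : Prop :=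
  exists cs : seq (R * R),
    (forall cg, cg \in cs -> G cg.2) /\ p = \sum_(cg <- cs) cg.1 * cg.2.

Record is_ideal (A : R -> Prop) : Prop := IsIdeal {
  id0 : A 0;
  idD : forall x y, A x -> A y -> A (x + y);
  idM : forall r x, A x -> A (r * x) }.

Lemma idN A : is_ideal A -> forall x, A x -> A (- x).
Proof. by move=> iA x Ax; rewrite -mulN1r; apply: idM. Qed.

Lemma idB A : is_ideal A -> forall x y, A x -> A y -> A (x - y).
Proof. by move=> iA x y Ax Ay; apply: idD => //; apply: idN. Qed.

Lemma idMr A : is_ideal A -> forall r x, A x -> A (x * r).
Proof. by move=> iA r x Ax; rewrite mulrC; apply: idM. Qed.

Lemma id_sum A (I : Type) (r : seq I) (Pr : pred I) (F : I -> R) :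
  is_ideal A -> (forall i, Pr i -> A (F i)) -> A (\sum_(i <- r | Pr i) F i).
Proof.
move=> iA HF; apply: (big_ind A); [exact: id0 | exact: idD |exact: HF].
Qed.

Lemma gideal_ideal G : is_ideal (gideal G).
Proof.
split.
- by exists [::]; split => //; rewrite big_nil.
- move=> x y [cs [Hc ->]] [ds [Hd ->]]; exists (cs ++ ds); split.
    by move=> cg; rewrite mem_cat => /orP [/Hc|/Hd].
  by rewrite big_cat.
- move=> r x [cs [Hc ->]]; exists [seq (r * cg.1, cg.2) | cg <- cs]; split.
    by move=> cg /mapP [cg' /Hc Hcg' ->].
  by rewrite big_map big_distrr /=; apply: eq_bigr => cg _; rewrite mulrA.
Qed.

Lemma gideal_gen G g : G g -> gideal G g.
Proof.
by move=> Gg; exists [:: (1, g)]; split; [move=> cg; rewrite inE => /eqP -> | rewrite big_seq1 mul1r].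
Qed.

Lemma gideal_min G A : is_ideal A -> (forall g, G g -> A g) ->
  forall x, gideal G x -> A x.
Proof.
move=> iA GA x [cs [Hc ->]]; rewrite big_seq; apply: id_sum => // cg /Hc Gc.
by apply: (idM iA); apply: GA.
Qed.

Definition famI (G : R -> Prop) (p : R) (X : R -> Prop) : Prop :=
  (forall x, ~ X x) \/
  (is_ideal X /\ (forall g, G g -> X g) /\ forall k, ~ X (p ^+ k)).

Lemma prime_avoid (G : R -> Prop) (p : R) : (forall k, ~ gideal G (p ^+ k)) ->
  exists A : R -> Prop, [/\ is_ideal A, (forall g, G g -> A g), ~ A p,
     ~ A 1 & forall a b, A (a * b) -> A a \/ A b].
Proof.
move=> Hp.
have Z := @classical_sets.Zorn_bigcup R (famI G p).
have [|A [FA maxA]] := Z.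
  move=> F FF Ftot.
  have Fid X x : F X -> X x ->
      is_ideal X /\ (forall g, G g -> X g) /\ forall k, ~ X (p ^+ k).
    by move=> FX Xx; case: (FF X FX) => [/(_ x)//|].
  case: (classic (exists X, F X /\ exists x, X x)) => [[X0 [FX0 [x0 X0x0]]]|nE].
  - right; have [iX0 [GX0 _]] := Fid _ _ FX0 X0x0.
    split; [split|split].
    + by exists X0 => //; apply: id0.
    + move=> x y [X1 FX1 X1x] [X2 FX2 X2y].
      case: (Ftot _ _ FX1 FX2) => [S12|S21].
      * have [iX2 _] := Fid _ _ FX2 X2y.
        by exists X2 => //; apply: idD => //; apply: S12.
      * have [iX1 _] := Fid _ _ FX1 X1x.
        by exists X1 => //; apply: idD => //; apply: S21.
    + move=> r x [X1 FX1 X1x]; have [iX1 _] := Fid _ _ FX1 X1x.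
      by exists X1 => //; apply: idM.
    + by move=> g Gg; exists X0 => //; apply: GX0.
    + move=> k [X1 FX1 X1k]; have [_ [_ H]] := Fid _ _ FX1 X1k.
      exact: (H k).
  - left=> x [X FX Xx]; apply: nE; by exists X; split => //; exists x.
have famI0 : famI G p (gideal G).
  right; split; [exact: gideal_ideal|split]; [exact: gideal_gen | exact: Hp].
case: FA => [Aempty | [iA [GA nA]]].
  exfalso; apply: (maxA (gideal G)) => //; split; first by move=> x /Aempty.
  move=> /(_ 0) H; apply: (Aempty 0); apply: H; exact: (id0 (gideal_ideal G)).
have nA1 : ~ A 1.
  by move=> A1; apply: (nA 0%N); rewrite expr0.
have nAp : ~ A p.
  by move=> Ap; apply: (nA 1%N); rewrite expr1.
exists A; split => // a b Aab.
case: (classic (A a)) => [Aa|nAa]; first by left.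
case: (classic (A b)) => [Ab|nAb]; first by right.
exfalso.
pose B c := fun x => exists y r, A y /\ x = y + r * c.
have Bid c : is_ideal (B c).
  split.
  - by exists 0, 0; split; [apply: id0 | rewrite mul0r addr0].
  - move=> x y [y1 [r1 [Ay1 ->]]] [y2 [r2 [Ay2 ->]]].
    exists (y1 + y2), (r1 + r2); split; first exact: idD.
    by rewrite mulrDl addrACA.
  - move=> r x [y1 [r1 [Ay1 ->]]]; exists (r * y1), (r * r1); split.
      exact: idM.
    by rewrite mulrDr mulrA.
have Bpow c : ~ A c -> exists k, B c (p ^+ k).
  move=> nAc; apply: NNPP => nk.
  apply: (maxA (B c)).
    split; first by move=> x Ax; exists x, 0; rewrite mul0r addr0.
    move=> /(_ c) H; apply: nAc; apply: H; exists 0, 1; split.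
      exact: id0.
    by rewrite add0r mul1r.
  right; split => //; split.
    by move=> g Gg; exists g, 0; rewrite mul0r addr0; split => //; apply: GA.
  by move=> k Bk; apply: nk; exists k.
have [k [y1 [r1 [Ay1 E1]]]] := Bpow a nAa.
have [l [y2 [r2 [Ay2 E2]]]] := Bpow b nAb.
apply: (nA (k + l)%N); rewrite exprD E1 E2.
have -> : (y1 + r1 * a) * (y2 + r2 * b) =
    y1 * (y2 + r2 * b) + (r1 * a) * y2 + (r1 * r2) * (a * b).
  by rewrite mulrDl !mulrDr !mulrA [r1 * a * r2]mulrAC addrA.
apply: idD => //; [apply: idD => //|]; [exact: idMr | exact: idM | exact: idM].
Qed.

End Ideals.


Section Esub.
Variables (R : comNzRingType) (L : nat) (v : 'I_L -> R).

Definition esub k (T : {set 'I_L}) : R :=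
  \sum_(A : {set 'I_L} | (A \subset T) && (#|A| == k)) \prod_(i in A) v i.

Lemma esub0 T : esub 0 T = 1.
Proof.
rewrite /esub (big_pred1 set0) ?big_set0 // => A /=.
rewrite cards_eq0; apply/andP/eqP => [[_ /eqP//]|->]; split; [exact: sub0set | done].
Qed.

Lemma esub_set0 k : esub k.+1 set0 = 0.
Proof.
rewrite /esub big_pred0 // => A; rewrite subset0.
by apply/negP => /andP [/eqP -> /eqP]; rewrite cards0.
Qed.

Lemma esub_card (T : {set 'I_L}) : esub #|T| T = \prod_(i in T) v i.
Proof.
rewrite /esub (big_pred1 T) // => A /=.
rewrite eqEcard; case: (boolP (A \subset T)) => //= sAT.
by rewrite eqn_leq subset_leq_card.
Qed.

Lemma esubU1 k (a : 'I_L) (T : {set 'I_L}) : a \notin T ->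
  esub k.+1 (a |: T) = esub k.+1 T + v a * esub k T.
Proof.
move=> aT; rewrite /esub (bigID (fun A : {set 'I_L} => a \in A)) /= addrC; congr (_ + _).
  apply: eq_bigl => A; case aA: (a \in A) => /=; rewrite ?andbF ?andbT.
    apply/esym/negbTE; apply/negP => /andP [/subsetP /(_ a aA) aT' _].
    by rewrite aT' in aT.
  congr (_ && _); apply/idP/idP => /subsetP H; apply/subsetP => x xA.
    by have := H x xA; rewrite !inE => /orP [/eqP xa|//]; rewrite xa aA in xA.
  by rewrite !inE H ?orbT.
rewrite big_distrr /=.
rewrite (reindex_onto (fun B => a |: B) (fun A => A :\ a)) /=; last first.
  by move=> A /andP [_ aA]; rewrite setD1K.
apply: eq_big => B.
  apply/idP/idP.
    move=> /andP [/andP [/andP [sub cB] _] /eqP eB].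
    have aB : a \notin B by rewrite -eB !inE eqxx.
    rewrite -eB setU1K // in sub cB *.
    rewrite cardsU1 aB /= add1n eqSS in cB; rewrite cB andbT.
    apply/subsetP => x xB; have := subsetP sub x; rewrite !inE xB orbT => /(_ isT).
    by case/orP => // /eqP xa; rewrite -xa xB in aB.
  move=> /andP [sub /eqP cB].
  have aB : a \notin B by apply/negP => /(subsetP sub); rewrite (negbTE aT).
  rewrite setU1K // eqxx setU11 cardsU1 aB cB eqxx !andbT /=.
  by apply/subsetP => x; rewrite !inE => /orP [->|/(subsetP sub) ->]; rewrite ?orbT.
move=> /andP [_ /eqP eB].
have aB : a \notin B by rewrite -eB !inE eqxx.
by rewrite big_setU1.
Qed.

End Esub.


Lemma ex_subset (T : finType) (W : {set T}) m : (m <= #|W|)%N ->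
  exists X : {set T}, X \subset W /\ #|X| = m.
Proof.
elim: m => [|m IH] hm; first by exists set0; rewrite sub0set cards0.
have [X [sXW cX]] := IH (ltnW hm).
have : (0 < #|W :\: X|)%N by rewrite cardsDS // cX subn_gt0.
rewrite card_gt0 => /set0Pn [x]; rewrite inE => /andP [xX xW].
exists (x |: X); split; first by rewrite subUset sub1set xW.
by rewrite cardsU1 xX cX.
Qed.

Lemma set_pick (T : finType) (X : {set T}) m : #|X| = m.+1 ->
  exists a Y, [/\ X = a |: Y, a \notin Y & #|Y| = m].
Proof.
move=> cX; have : (0 < #|X|)%N by rewrite cX.
rewrite card_gt0 => /set0Pn [a aX]; exists a, (X :\ a); split.
- by rewrite setD1K.
- by rewrite !inE eqxx.
- by move: cX; rewrite (cardsD1 a) aX add1n => [[]].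
Qed.

Section Comb.
Variables (R : comNzRingType) (L : nat) (v : 'I_L -> R).
Variables (P : R -> Prop) (iP : is_ideal P).
Local Notation esub := (esub v).

Lemma esub_const (W : {set 'I_L}) (g : R) :
  (forall w, w \in W -> P (v w - g)) ->
  forall T : {set 'I_L}, T \subset W -> forall k, P (esub k T - ('C(#|T|, k))%:R * g ^+ k).
Proof.
move=> HW T; move Hm: #|T| => m; elim: m T Hm => [|m IH] T cT sTW k.
  move/eqP: cT; rewrite cards_eq0 => /eqP ->.
  case: k => [|k]; first by rewrite esub0 bin0 expr0 mulr1 subrr; exact: id0.
  by rewrite esub_set0 bin0n mul0r subrr; exact: id0.
have [a [Y [ET aY cY]]] := set_pick cT; subst T.
have sYW : Y \subset W by apply: subset_trans _ sTW; apply/subsetP => x xY; rewrite inE xY orbT.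
have aW : a \in W by apply: (subsetP sTW); rewrite setU11.
case: k => [|k]; first by rewrite esub0 bin0 expr0 mulr1 subrr; exact: id0.
rewrite esubU1 // binS natrD.
have -> : esub k.+1 Y + v a * esub k Y - ('C(m, k.+1)%:R + 'C(m, k)%:R) * g ^+ k.+1
  = (esub k.+1 Y - 'C(m, k.+1)%:R * g ^+ k.+1) + v a * (esub k Y - 'C(m, k)%:R * g ^+ k)
    + (v a - g) * ('C(m, k)%:R * g ^+ k).
  by rewrite exprS; ring.
apply: (idD iP); first apply: (idD iP).
- by apply: IH.
- by apply: (idM iP); apply: IH.
- by apply: (idMr iP); apply: HW.
Qed.

Lemma esub_zeros (T X : {set 'I_L}) :
  (forall w, w \in X -> P (v w)) -> [disjoint T & X] ->
  forall k, P (esub k (T :|: X) - esub k T).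
Proof.
move=> HX; move Hm: #|X| => m; elim: m X Hm HX => [|m IH] X cX HX dTX k.
  move/eqP: cX; rewrite cards_eq0 => /eqP ->; rewrite setU0 subrr; exact: id0.
have [a [Y [EX aY cY]]] := set_pick cX.
have HY : forall w, w \in Y -> P (v w) by move=> w wY; apply: HX; rewrite EX inE wY orbT.
have aX : a \in X by rewrite EX setU11.
have dTY : [disjoint T & Y].
  by apply: disjointWr dTX; rewrite EX subsetUr.
have aTY : a \notin T :|: Y.
  rewrite inE negb_or aY andbT; apply/negP => aT.
  by move: dTX; rewrite disjoint_sym => /disjointFr /(_ aX); rewrite aT.
case: k => [|k]; first by rewrite !esub0 subrr; exact: id0.
rewrite EX setUCA esubU1 //.
have -> : esub k.+1 (T :|: Y) + v a * esub k (T :|: Y) - esub k.+1 T =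
  (esub k.+1 (T :|: Y) - esub k.+1 T) + v a * esub k (T :|: Y) by ring.
apply: (idD iP); first exact: IH.
by apply: (idMr iP); apply: HX.
Qed.

Variables (pP : forall a b, P (a * b) -> P a \/ P b) (nP1 : ~ P 1).

Lemma nPX a k : ~ P a -> ~ P (a ^+ k).
Proof.
move=> na; elim: k => [|k IH]; first by rewrite expr0.
by rewrite exprS => /pP [].
Qed.

Lemma nP_prod (D : {set 'I_L}) : ~ P (\prod_(i in D) v i) ->
  forall i, i \in D -> ~ P (v i).
Proof.
move=> nD i iD Pi; apply: nD; rewrite (big_setD1 i) //=; exact: (idMr iP).
Qed.

Lemma comb n d : (1 <= d <= n)%N -> (n + d <= L)%N -> ~ P ('C(n, d)%:R) ->
  forall D : {set 'I_L}, #|D| = d -> ~ P (\prod_(i in D) v i) ->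
  (forall S : {set 'I_L}, #|S| = n -> P (esub d S)) -> False.
Proof.
move=> /andP [d1 dn] ndL nC D cD nD HS.
pose Q j := forall W : {set 'I_L}, (n + d <= #|W| + 2 * j)%N ->
  (forall T : {set 'I_L}, T \subset W -> #|T| = (n - j)%N ->
     forall k, (d - j <= k <= d)%N -> P (esub k T)) -> False.
have Qall : forall i j, (j + i = d)%N -> Q j.
  elim=> [|i IH] j hj.
    rewrite addn0 in hj; subst j => W hW H.
    have [T [sTW cT]] := @ex_subset _ W (n - d) ltac:(lia).
    by apply: nP1; rewrite -(esub0 v T); apply: H => //; rewrite subnn leq0n.
  move=> W hW H.
  case: (classic (exists a b, [/\ a \in W, b \in W & ~ P (v a - v b)])).
    move=> [a [b [aW bW nab]]].
    have ab : a != b by apply/negP => /eqP eab; apply: nab; rewrite eab subrr; exact: id0.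
    pose W' := W :\ a :\ b.
    have cW : #|W| = (#|W'| + 2)%N.
      have c1 := cardsD1 a W; have c2 := cardsD1 b (W :\ a).
      have bWa : b \in W :\ a by rewrite !inE eq_sym ab bW.
      rewrite aW in c1; rewrite bWa in c2; rewrite /W'; lia.
    apply: (IH j.+1 ltac:(lia) W'); first by lia.
    move=> T sTW' cT k hk.
    have aT : a \notin T.
      by apply/negP => /(subsetP sTW'); rewrite !inE eqxx andbF.
    have bT : b \notin T.
      by apply/negP => /(subsetP sTW'); rewrite !inE eqxx.
    have sW' : W' \subset W by apply/subsetP => x; rewrite !inE => /and3P [].
    have key : forall k', (d - j <= k'.+1 <= d)%N -> P (esub k' T) /\ P (esub k'.+1 T).
      move=> k' hk'.
      have Ha := H (a |: T); have Hb := H (b |: T).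
      have c1 : forall c, c \notin T -> #|c |: T| = (n - j)%N.
        by move=> c cT'; rewrite cardsU1 cT' cT; lia.
      have Pa : P (esub k'.+1 (a |: T)).
        by apply: Ha => //; [rewrite subUset sub1set aW (subset_trans sTW' sW') | exact: c1].
      have Pb : P (esub k'.+1 (b |: T)).
        by apply: Hb => //; [rewrite subUset sub1set bW (subset_trans sTW' sW') | exact: c1].
      rewrite esubU1 // in Pa; rewrite esubU1 // in Pb.
      have Pd : P ((v a - v b) * esub k' T).
        have -> : (v a - v b) * esub k' T =
          (esub k'.+1 T + v a * esub k' T) - (esub k'.+1 T + v b * esub k' T) by ring.
        exact: (idB iP).
      have Pk' : P (esub k' T) by case: (pP Pd).
      split => //.
      have -> : esub k'.+1 T = (esub k'.+1 T + v a * esub k' T) - v a * esub k' T by ring.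
      by apply: (idB iP) => //; apply: (idM iP).
    case: (ltnP k d) => kd.
      by case: (key k ltac:(lia)).
    have -> : k = d.-1.+1 by lia.
    by case: (key d.-1 ltac:(lia)).
  move=> nex.
  have Wne : (0 < #|W|)%N by lia.
  move: Wne; rewrite card_gt0 => /set0Pn [w0 w0W].
  have HW : forall w, w \in W -> P (v w - v w0).
    move=> w wW; apply: NNPP => nw; apply: nex; by exists w, w0.
  case: (classic (P (v w0))) => [Pg|nPg].
    have HW0 : forall w, w \in W -> P (v w).
      move=> w wW; have -> : v w = (v w - v w0) + v w0 by ring.
      by apply: (idD iP) => //; apply: HW.
    have [W0 [sW0 cW0]] := @ex_subset _ W (n - d) ltac:(lia).
    have HW00 : forall w, w \in W0 -> P (v w) by move=> w /(subsetP sW0) /HW0.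
    have dDW : [disjoint D & W0].
      rewrite -setI_eq0; apply/eqP/setP => x; rewrite !inE; apply/negP => /andP [xD xW0].
      exact: (nP_prod nD xD (HW00 _ xW0)).
    have cS : #|D :|: W0| = n.
      have EI : D :&: W0 = set0 by apply/eqP; rewrite setI_eq0.
      rewrite cardsU EI cards0 cD cW0; lia.
    apply: nD; rewrite -esub_card cD.
    have -> : esub d D = esub d (D :|: W0) - (esub d (D :|: W0) - esub d D) by ring.
    apply: (idB iP); first exact: HS.
    exact: esub_zeros.
  have [T [sTW cT]] := @ex_subset _ W (n - j) ltac:(lia).
  have Hc := esub_const HW sTW.
  have PC : forall k, (d - j <= k <= d)%N -> P ('C(n - j, k)%:R).
    move=> k hk.
    have Pk := H T sTW cT k hk.
    have Pc : P ('C(n - j, k)%:R * v w0 ^+ k).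
      have := Hc k; rewrite cT => Hk.
      have -> : 'C(n - j, k)%:R * v w0 ^+ k =
        esub k T - (esub k T - 'C(n - j, k)%:R * v w0 ^+ k) by ring.
      exact: (idB iP).
    by case: (pP Pc) => // Pg; exfalso; exact: (nPX (k:=k) nPg Pg).
  have Pas : forall i, (i <= j)%N -> forall k, (d - j + i <= k <= d)%N ->
      P ('C(n - j + i, k)%:R).
    elim=> [|i0 IHi] ij k hk; first by rewrite addn0; apply: PC; rewrite addn0 in hk.
    have -> : k = k.-1.+1 by lia.
    have -> : (n - j + i0.+1 = (n - j + i0).+1)%N by lia.
    rewrite binS natrD; apply: (idD iP); apply: IHi; lia.
  apply: nC; have := Pas j (leqnn j) d ltac:(lia).
  by have -> : (n - j + j = n)%N by lia.
have := Qall d 0%N ltac:(lia) setT.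
rewrite cardsT card_ord muln0 addn0 => /(_ ndL); apply.
move=> T _; rewrite subn0 => cT k; rewrite subn0 => /andP [k1 k2].
have -> : k = d by lia.
exact: HS.
Qed.

End Comb.


Lemma perm_transport (T : finType) (A B : {set T}) : #|A| = #|B| ->
  exists s : {perm T}, s @: A = B.
Proof.
move Hm : #|A :\: B| => m; elim: m A Hm => [|m IH] A Hm cAB.
  exists 1%g; rewrite (eq_imset (g := id)); last by move=> x; rewrite perm1.
  rewrite imset_id; apply/eqP; rewrite eqEcard -cAB leqnn andbT.
  by rewrite -setD_eq0 -cards_eq0 Hm.
have : (0 < #|A :\: B|)%N by rewrite Hm.
rewrite card_gt0 => /set0Pn [a]; rewrite inE => /andP [aB aA].
have cBA : (0 < #|B :\: A|)%N.
  rewrite !cardsD; have := cardsUI A B; have := leq_card_setU A B.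
  move=> _ h.
  have : (#|A :&: B| < #|A|)%N.
    rewrite (cardsD1 a A) aA add1n ltnS; apply: subset_leq_card.
    by apply/subsetP => x; rewrite !inE => /andP [xA xB]; rewrite xA andbT; apply/eqP => xa; rewrite -xa xB in aB.
  rewrite setIC; lia.
move: cBA; rewrite card_gt0 => /set0Pn [b]; rewrite inE => /andP [bA bB].
pose A' := (tperm a b) @: A.
have cA' : #|A'| = #|B| by rewrite card_imset //; exact: perm_inj.
have EA' : A' = b |: (A :\ a).
  apply/setP => x; rewrite /A' inE.
  apply/imsetP/idP.
    move=> [y yA ->]; rewrite !inE.
    case: (eqVneq y a) => [->|ya]; first by rewrite tpermL eqxx.
    case: (eqVneq y b) => [yb|yb]; first by rewrite -yb yA in bA.
    by rewrite tpermD 1?eq_sym // ya yA orbT.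
  rewrite !inE => /orP [/eqP ->|/andP [xa xA]].
    by exists a => //; rewrite tpermL.
  exists x => //; rewrite tpermD //; first by rewrite eq_sym.
  by apply/negP => /eqP E; subst; rewrite xA in bA.
have HA' : #|A' :\: B| = m.
  have E : A' :\: B = (A :\: B) :\ a.
    apply/setP => x; rewrite EA' !inE.
    case: (eqVneq x b) => [->|xb]; first by rewrite bB /= andbF.
    by rewrite /=; case: (x \in B); case: (x != a).
  move: Hm; rewrite E (cardsD1 a (A :\: B)) !inE aA aB /= add1n => [[]].
  done.
have [s Hs] := IH A' HA' cA'.
exists (tperm a b * s)%g; rewrite -Hs /A' -imset_comp.
by apply: eq_imset => x /=; rewrite permM.
Qed.


Section MP.
Variables (K : fieldType) (N : nat).
Local Notation MP := {mpoly K[N]}.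
Definition Xv (i : 'I_N) : MP := 'X_i.
Definition lowset m : {set 'I_N} := [set i : 'I_N | (i < m)%N].

Lemma card_lowset m : (m <= N)%N -> #|lowset m| = m.
Proof.
move=> mN.
have -> : lowset m = [set widen_ord mN i | i : 'I_m].
  apply/setP => x; rewrite inE; apply/idP/imsetP.
    by move=> xm; exists (Ordinal xm) => //; apply/val_inj.
  by move=> [i _ ->] /=.
by rewrite card_imset ?card_ord //; move=> x y /(congr1 val) /= E; exact: val_inj.
Qed.

Lemma msymXU (s : 'S_N) i : msym s ('X_i : MP) = 'X_(s i).
Proof. by rewrite /msym mmapX mmap1U. Qed.

Lemma msym_prod (s : 'S_N) (T : {set 'I_N}) :
  msym s (\prod_(i in T) Xv i) = \prod_(i in s @: T) Xv i.
Proof.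
rewrite rmorph_prod big_imset /=; last by move=> x y _ _; exact: perm_inj.
by apply: eq_bigr => i _; rewrite /Xv msymXU.
Qed.

Lemma msym_esub (s : 'S_N) k (T : {set 'I_N}) :
  msym s (esub Xv k T) = esub Xv k (s @: T).
Proof.
rewrite /esub rmorph_sum /=.
rewrite [RHS](reindex_inj (h := fun A : {set 'I_N} => s @: A)); last first.
  by move=> A B /= E; apply: (imset_inj (@perm_inj _ s)).
apply: eq_big => A; last by move=> _; exact: msym_prod.
rewrite card_imset; last exact: perm_inj.
congr (_ && _); apply/idP/idP; first exact: imsetS.
move=> /subsetP H; apply/subsetP => x xA.
have /imsetP [y yT /perm_inj ->] := H _ (imset_f s xA); done.
Qed.

Lemma esym_firstE n d : esym_first K N n d = esub Xv d (lowset n).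
Proof. by []. Qed.

Lemma prod_firstE d : prod_first K N d = \prod_(i in lowset d) Xv i.
Proof. by apply: eq_bigl => i; rewrite inE. Qed.

Lemma orbit_esym n d : (n <= N)%N -> forall S : {set 'I_N}, #|S| = n ->
  SN_orbit (esym_first K N n d) (esub Xv d S).
Proof.
move=> nN S cS; have [s Hs] := @perm_transport _ (lowset n) S ltac:(by rewrite card_lowset).
by exists s; rewrite esym_firstE msym_esub Hs.
Qed.

Lemma orbit_esym_inv n d g : (n <= N)%N -> SN_orbit (esym_first K N n d) g ->
  exists S : {set 'I_N}, #|S| = n /\ g = esub Xv d S.
Proof.
move=> nN [s ->]; exists (s @: lowset n); split.
  by rewrite card_imset ?card_lowset //; exact: perm_inj.
by rewrite esym_firstE msym_esub.
Qed.

Lemma orbit_prod d : (d <= N)%N -> forall D : {set 'I_N}, #|D| = d ->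
  SN_orbit (prod_first K N d) (\prod_(i in D) Xv i).
Proof.
move=> dN D cD; have [s Hs] := @perm_transport _ (lowset d) D ltac:(by rewrite card_lowset).
by exists s; rewrite prod_firstE msym_prod Hs.
Qed.

Lemma orbit_prod_inv d g : (d <= N)%N -> SN_orbit (prod_first K N d) g ->
  exists D : {set 'I_N}, #|D| = d /\ g = \prod_(i in D) Xv i.
Proof.
move=> dN [s ->]; exists (s @: lowset d); split.
  by rewrite card_imset ?card_lowset //; exact: perm_inj.
by rewrite prod_firstE msym_prod.
Qed.

End MP.


Section MP2.
Variables (K : fieldType) (N : nat).
Local Notation MP := {mpoly K[N]}.

Lemma partA n d : (1 <= d <= n)%N -> (n + d <= N)%N -> ('C(n, d))%:R != 0 :> K ->
  forall p : MP, in_ideal (SN_orbit (prod_first K N d)) p ->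
    in_radical (SN_orbit (esym_first K N n d)) p.
Proof.
move=> hd hN hC p Hp; apply: NNPP => Hr.
have Hk : forall k, ~ gideal (SN_orbit (esym_first K N n d)) (p ^+ k).
  by move=> k Hk; apply: Hr; exists k.
have [Pr [iP GP nPp nP1 pP]] := prime_avoid Hk.
have dN : (d <= N)%N by lia.
have nN : (n <= N)%N by lia.
have [g [Jg ng]] : exists g, SN_orbit (prod_first K N d) g /\ ~ Pr g.
  apply: NNPP => H; apply: nPp; apply: (gideal_min iP _ Hp) => g Jg.
  by apply: NNPP => ng; apply: H; exists g.
have [D [cD Eg]] := orbit_prod_inv dN Jg; subst g.
apply: (comb iP pP nP1 hd hN _ cD ng).
  move=> PC; apply: nP1.
  have -> : (1 : MP) = ((('C(n, d))%:R : K)^-1)%:MP * ('C(n, d))%:R.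
    by rewrite -(rmorph_nat (@mpolyC N K)) -rmorphM mulVf // rmorph1.
  exact: (idM iP).
by move=> S cS; apply: GP; apply: orbit_esym.
Qed.

Definition supp (m : 'X_{1..N}) : {set 'I_N} := [set i | m i != 0%N].
Definition mono (D : {set 'I_N}) : 'X_{1..N} := [multinom ((i \in D) : nat) | i < N].

Lemma Xprod_mono (D : {set 'I_N}) : \prod_(i in D) Xv K i = 'X_[mono D].
Proof.
rewrite mpolyXE_id big_mkcond /=; apply: eq_bigr => i _.
by rewrite /mono mnmE; case: (i \in D); rewrite ?expr1 ?expr0.
Qed.

Lemma coefM_mono (c : MP) (D : {set 'I_N}) m : ~~ (D \subset supp m) ->
  (c * 'X_[mono D])@_m = 0.
Proof.
move=> nDm; rewrite {1}(mpolyE c) mulr_suml raddf_sum /=.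
apply: big1_seq => m' _; rewrite -scalerAl -mpolyXD mcoeffZ mcoeffX.
case: eqP => [E|]; last by rewrite mulr0.
exfalso; move/negP: nDm; apply; apply/subsetP => i iD.
by rewrite inE -E mnmDE /mono mnmE iD addn1.
Qed.

Lemma J_coef d (q : MP) : (d <= N)%N -> in_ideal (SN_orbit (prod_first K N d)) q ->
  forall m, (#|supp m| < d)%N -> q@_m = 0.
Proof.
move=> dN [cs [Hc ->]] m hm; rewrite raddf_sum /=.
apply: big1_seq => cg /andP [_ cgin].
have [D [cD E]] := orbit_prod_inv dN (Hc _ cgin); rewrite E Xprod_mono coefM_mono //.
by apply/negP => sub; have := subset_leq_card sub; lia.
Qed.

Lemma term_in_J d (c : K) m : (d <= N)%N -> (d <= #|supp m|)%N ->
  in_ideal (SN_orbit (prod_first K N d)) (c *: 'X_[m]).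
Proof.
move=> dN hm; have [D [sD cD]] := ex_subset hm.
have le : (mono D <= m)%MM.
  apply/mnm_lepP => i; rewrite /mono mnmE; case iD: (i \in D) => //.
  by have := subsetP sD i iD; rewrite inE lt0n.
rewrite -(submK le) mpolyXD scalerAl -Xprod_mono.
apply: (idM (gideal_ideal _)); apply: gideal_gen; exact: orbit_prod.
Qed.

Lemma big_to_J d (q : MP) : (d <= N)%N ->
  (forall m, (#|supp m| < d)%N -> q@_m = 0) ->
  in_ideal (SN_orbit (prod_first K N d)) q.
Proof.
move=> dN H; rewrite (mpolyE q); apply: (id_sum _ (gideal_ideal _)) => m _.
case: (ltnP #|supp m| d) => h; last exact: term_in_J.
by rewrite H // scale0r; exact: (id0 (gideal_ideal _)).
Qed.

Lemma J_radical d k (q : MP) : (1 <= d)%N -> (d <= N)%N ->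
  in_ideal (SN_orbit (prod_first K N d)) (q ^+ k) ->
  in_ideal (SN_orbit (prod_first K N d)) q.
Proof.
move=> d1 dN Hk; apply: NNPP => nq.
set J := SN_orbit (prod_first K N d) in Hk nq *.
have iJ : is_ideal (gideal J) := gideal_ideal J.
pose sm (m : 'X_{1..N}) := (#|supp m| < d)%N.
pose q1 := \sum_(m <- msupp q | sm m) q@_m *: 'X_[m].
pose q2 := \sum_(m <- msupp q | ~~ sm m) q@_m *: 'X_[m].
have Eq : q = q1 + q2 by rewrite {1}(mpolyE q) (bigID sm).
have Jq2 : gideal J q2.
  apply: (id_sum _ iJ) => m; rewrite /sm -leqNgt; exact: term_in_J.
have q1big : forall m, ~~ sm m -> q1@_m = 0.
  move=> m hm; rewrite raddf_sum /=; apply: big1_seq => m' /andP [hm' _].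
  rewrite mcoeffZ mcoeffX; case: eqP => [E|]; last by rewrite mulr0.
  by rewrite -E hm' in hm.
have q1small : forall m, sm m -> q1@_m = q@_m.
  move=> m hm; rewrite [in RHS]Eq mcoeffD (J_coef dN Jq2 hm) addr0 //.
have [m0 [hm0 qm0]] : exists m, sm m /\ q@_m != 0.
  apply: NNPP => H; apply: nq; apply: (big_to_J dN) => m hm.
  apply: NNPP => nz; apply: H; exists m; split => //; exact/eqP.
have q1nz : q1 != 0.
  by apply/eqP => E; move: qm0; rewrite -q1small // E mcoeff0 eqxx.
have Jq1k : gideal J (q1 ^+ k).
  have -> : q1 ^+ k = q ^+ k - (q ^+ k - q1 ^+ k) by ring.
  apply: (idB iJ) => //; rewrite subrXX.
  have -> : q - q1 = q2 by rewrite [in LHS]Eq; ring.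
  exact: (idMr iJ).
set M := mlead q1.
have sM : sm M.
  apply: NNPP => hM; move: q1nz; rewrite -mleadc_eq0.
  by rewrite q1big ?eqxx //; apply/negP.
have sMk : sm (M *+ k)%MM.
  rewrite /sm; apply: leq_ltn_trans sM; apply: subset_leq_card.
  apply/subsetP => i; rewrite !inE mulmnE; apply: contra => /eqP ->.
  by rewrite mul0n.
have := J_coef dN Jq1k sMk; rewrite mleadcX => /eqP.
by rewrite expf_eq0 mleadc_eq0 (negbTE q1nz) andbF.
Qed.

Lemma partB n d : (1 <= d <= n)%N -> (n <= N)%N ->
  forall p : MP, in_radical (SN_orbit (esym_first K N n d)) p ->
    in_ideal (SN_orbit (prod_first K N d)) p.
Proof.
move=> /andP [d1 dn] nN p [k Hk].
have dN : (d <= N)%N by lia.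
apply: (J_radical (k := k) d1 dN).
apply: (gideal_min (gideal_ideal _) _ Hk) => g Ig.
have [S [cS ->]] := orbit_esym_inv nN Ig.
rewrite /esub; apply: (id_sum _ (gideal_ideal _)) => A /andP [_ /eqP cA].
by apply: gideal_gen; apply: orbit_prod.
Qed.

Lemma part2 n d : (n <= N)%N -> ('C(n, d))%:R = 0 :> K ->
  forall p : MP, is_monomial p -> ~ in_radical (SN_orbit (esym_first K N n d)) p.
Proof.
move=> nN hC p [m ->] [k Hk].
pose v1 := fun _ : 'I_N => (1 : K).
have iZ : is_ideal (fun x : K => x = 0).
  split => //; [by move=> x y -> ->; rewrite addr0 | by move=> r x ->; rewrite mulr0].
have iE : is_ideal (fun x : MP => meval v1 x = 0).
  split; [exact: meval0 | by move=> x y hx hy; rewrite mevalD hx hy addr0 |].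
  by move=> r x hx; rewrite mevalM hx mulr0.
have := gideal_min iE _ Hk.
have -> : meval v1 ('X_[m] ^+ k) = 1.
  rewrite mpolyXn mevalX; apply: big1 => i _; by rewrite expr1n.
move=> H; suff : (1 : K) = 0 by move/eqP; rewrite oner_eq0.
apply: H => g Ig.
have [S [cS ->]] := orbit_esym_inv nN Ig.
have -> : meval v1 (esub (@Xv K N) d S) = esub v1 d S.
  rewrite /esub (big_morph (meval v1) (mevalD v1) (meval0 v1)); apply: eq_bigr => A _.
  rewrite (big_morph (meval v1) (mevalM v1) (meval1 v1)); apply: eq_bigr => i _.
  by rewrite /Xv mevalXU.
have := esub_const iZ (W := S) (g := 1) (v := v1) _ (subxx S) d.
rewrite cS hC mul0r subr0; apply.
by move=> w _; rewrite subrr.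
Qed.

End MP2.


Theorem proposition2p1 (K : fieldType) (n d : nat) :
  (1 <= d <= n)%N ->
  (forall N : nat, (n + d <= N)%N ->
     ('C(n, d))%:R != 0 :> K ->
     forall p : {mpoly K[N]},
       in_radical (SN_orbit (@esym_first K N n d)) p <->
       in_ideal (SN_orbit (@prod_first K N d)) p)
  /\
  (forall N : nat, (n <= N)%N ->
     ('C(n, d))%:R = 0 :> K ->
     forall p : {mpoly K[N]},
       is_monomial p -> ~ in_radical (SN_orbit (@esym_first K N n d)) p).
Proof.
move=> hd; split.
- move=> N hN hC p; split.
    apply: partB => //; lia.
  exact: partA.
- move=> N nN hC p; exact: part2.
Qed.
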